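(* For every constant $K>0$ there is a constant $C=C(K)$ such that for all integers $n\ge 2$ and all real $M$ with $1\le M\le K(\log n)^2$, $$\sum_{\substack{m\in\mathbb{Z}\\ M\le m\le n}} r(n,m)\le \frac{C\,n\log n}{M}.$$
   Context: Logarithms are natural. For positive integers $n,d$, the Euclidean algorithm sets $a_0=n$, $a_1=d$, and for $k\ge1$, as long as $a_k\ne0$, defines $a_{k+1}$ as the remainder of $a_{k-1}$ modulo $a_k$ and $q_k$ as the positive integer with $a_{k-1}=q_ka_k+a_{k+1}$; it stops at the first $\ell$ with $a_\ell=0$. The quotient sequence is $\mathbf{q}(n,d)=(q_1,\dots,q_{\ell-1})$. For integers $1\le m\le n$, $r(n,m)$ is the total number of occurrences of $m$ in the sequences $\mathbf{q}(n,d)$, summed over all $d\in\{1,\dots,n-1\}$ with $\gcd(n,d)=1$. *)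

(* Defs.v *)
From Stdlib Require Import Reals Arith List Lia.
Import ListNotations.

(* Euclidean algorithm quotients: state (a_{k-1}, a_k); fuel bounds steps. *)
Fixpoint quots (fuel a b : nat) : list nat :=
  match fuel with
  | O => []
  | S f => if Nat.eqb b 0 then [] else (a / b) :: quots f b (a mod b)
  end.

(* q(n,d) = (q_1,...,q_{l-1}); d+1 steps of fuel suffice since a_k strictly
   decreases from a_1 = d. *)
Definition quot_seq (n d : nat) : list nat := quots (S d) n d.

Definition r (n m : nat) : nat :=
  fold_right Nat.add 0
    (map (fun d => if Nat.eqb (Nat.gcd n d) 1 then count_occ Nat.eq_dec (quot_seq n d) m else 0)
         (seq 1 (n - 1))).

Example quot_seq_test : quot_seq 7 3 = [2; 3]. Proof. reflexivity. Qed.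
Example r_test : r 5 2 = 3%nat. Proof. reflexivity. Qed.

(* Main.v *)
Require Import Defs.
From Stdlib Require Import Reals Arith List Lia ZArith Lra.
Import ListNotations.

Fixpoint sumf (f : nat -> nat) (a len : nat) : nat :=
  match len with O => O | S l => f a + sumf f (S a) l end.

Lemma sumf_split f a x y : sumf f a (x + y) = sumf f a x + sumf f (a + x) y.
Proof.
  revert a; induction x as [|x IH]; intros a; simpl.
  - now rewrite Nat.add_0_r.
  - rewrite IH. replace (S a + x) with (a + S x) by lia. lia.
Qed.

Lemma sumf_last f a n : sumf f a (S n) = sumf f a n + f (a + n).
Proof. replace (S n) with (n + 1) by lia. rewrite sumf_split. simpl. lia. Qed.

Lemma sumf_le f g a len : (forall i, a <= i < a + len -> f i <= g i) -> sumf f a len <= sumf g a len.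
Proof.
  revert a; induction len as [|len IH]; intros a H; simpl; [lia|].
  pose proof (H a ltac:(lia)). pose proof (IH (S a) ltac:(intros; apply H; lia)). lia.
Qed.

Lemma sumf_ext f g a len : (forall i, a <= i < a + len -> f i = g i) -> sumf f a len = sumf g a len.
Proof.
  revert a; induction len as [|len IH]; intros a H; simpl; [lia|].
  rewrite (H a ltac:(lia)). rewrite (IH (S a) ltac:(intros; apply H; lia)). lia.
Qed.

Lemma sumf_add f g a len : sumf (fun i => f i + g i) a len = sumf f a len + sumf g a len.
Proof. revert a; induction len; intros a; simpl; [lia|]. rewrite IHlen. lia. Qed.

Lemma sumf_zero a len : sumf (fun _ => 0) a len = 0.
Proof. revert a; induction len; intros a; simpl; auto. Qed.

Lemma sumf_swap (f : nat -> nat -> nat) a la b lb :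
  sumf (fun i => sumf (fun j => f i j) b lb) a la = sumf (fun j => sumf (fun i => f i j) a la) b lb.
Proof.
  revert a; induction la as [|la IH]; intros a; simpl.
  - symmetry. apply sumf_zero.
  - rewrite IH. rewrite <- sumf_add. reflexivity.
Qed.

Lemma sumf_scal c f a len : sumf (fun i => c * f i) a len = c * sumf f a len.
Proof. revert a; induction len; intros a; simpl; [lia|]. rewrite IHlen. lia. Qed.

Lemma fold_map_seq (f : nat -> nat) a len : fold_right Nat.add 0 (map f (seq a len)) = sumf f a len.
Proof. revert a; induction len; intros a; simpl; auto. Qed.

Lemma sumf_refl (g : nat -> nat) m : sumf (fun i => g (m - i)) 0 (S m) = sumf g 0 (S m).
Proof.
  induction m as [|m IH].
  - simpl. reflexivity.
  - change (sumf (fun i => g (S m - i)) 0 (S (S m))) with (g (S m - 0) + sumf (fun i => g (S m - i)) 1 (S m)).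
    assert (E: forall h a len, sumf h (S a) len = sumf (fun i => h (S i)) a len).
    { intros h a0 len; revert a0; induction len; intros a0; simpl; auto. }
    rewrite E. simpl (fun i => g (S m - S i)).
    rewrite IH. rewrite (sumf_last g 0 (S m)). simpl. lia.
Qed.

Lemma sumf_shift (h : nat -> nat) p a len : (forall x, h (x + p) = h x) ->
  sumf h (a + p) len = sumf h a len.
Proof.
  intros Hp; revert a; induction len; intros a; simpl; auto.
  rewrite Hp. replace (S (a + p)) with (S a + p) by lia. rewrite IHlen. auto.
Qed.

Lemma sumf_period (h : nat -> nat) p g : (forall x, h (x + p) = h x) ->
  sumf h 0 (g * p) = g * sumf h 0 p.
Proof.
  intros Hp; induction g as [|g IH]; simpl; auto.
  rewrite sumf_split. simpl.
  assert (sumf h p (g * p) = sumf h 0 (g*p)) as ->.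
  { change p with (0 + p) at 1. apply sumf_shift; auto. }
  rewrite IH. lia.
Qed.

Open Scope bool_scope.
Open Scope nat_scope.

Lemma sumf_filter (P : nat -> bool) a len :
  sumf (fun d => if P d then 1 else 0) a len = length (filter P (seq a len)).
Proof. revert a; induction len; intros a; simpl; auto. destruct (P a); simpl; auto. Qed.

Lemma inj_count (f : nat -> nat) N L :
  (forall x y, x < N -> y < N -> f x = f y -> x = y) ->
  sumf (fun d => if (1 <=? f d) && (f d <=? L) then 1 else 0) 0 N <= L.
Proof.
  intros Hinj. rewrite sumf_filter.
  set (l := filter _ _).
  assert (Hl : forall x, In x l -> x < N /\ 1 <= f x <= L).
  { intros x Hx. unfold l in Hx. apply filter_In in Hx as [H1 H2].
    apply in_seq in H1. apply Bool.andb_true_iff in H2 as [H2 H3].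
    apply Nat.leb_le in H2; apply Nat.leb_le in H3. lia. }
  rewrite <- (length_map f l). eapply Nat.le_trans; [apply NoDup_incl_length with (l' := seq 1 L)|rewrite length_seq; lia].
  - apply NoDup_map_NoDup_ForallPairs.
    + intros x y Hx Hy E. apply Hl in Hx; apply Hl in Hy. apply Hinj; tauto.
    + apply NoDup_filter, seq_NoDup.
  - intros y Hy. apply in_map_iff in Hy as [x [<- Hx]]. apply Hl in Hx. apply in_seq. lia.
Qed.

Lemma coprime_inj Q n : 0 < n -> Nat.gcd Q n = 1 ->
  forall x y, x < n -> y < n -> (Q * x) mod n = (Q * y) mod n -> x = y.
Proof.
  intros Hn Hg.
  assert (K : forall x y, y <= x -> x < n -> (Q * x) mod n = (Q * y) mod n -> x = y).
  { intros x y Hyx Hx E.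
    assert (Hd : Nat.divide n (Q * (x - y))).
    { exists (Q * x / n - Q * y / n).
      pose proof (Nat.div_mod_eq (Q*x) n). pose proof (Nat.div_mod_eq (Q*y) n).
      rewrite Nat.mul_sub_distr_l, Nat.mul_sub_distr_r. nia. }
    apply Nat.gauss in Hd; [| rewrite Nat.gcd_comm; auto].
    destruct Hd as [z Hz]. destruct z; nia. }
  intros x y Hx Hy E. destruct (Nat.le_ge_cases y x).
  - apply K; auto.
  - symmetry; apply K; auto.
Qed.

Lemma count_mod Q n L : 0 < n ->
  sumf (fun d => if (1 <=? (Q * d) mod n) && ((Q * d) mod n <=? L) then 1 else 0) 0 n <= L.
Proof.
  intros Hn.
  set (g := Nat.gcd Q n).
  assert (Hg0 : g <> 0). { unfold g. intro H. apply Nat.gcd_eq_0 in H. lia. }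
  destruct (Nat.gcd_divide_l Q n) as [Q' HQ]. destruct (Nat.gcd_divide_r Q n) as [n' Hn'].
  fold g in HQ, Hn'.
  assert (Hc : Nat.gcd Q' n' = 1).
  { pose proof (Nat.gcd_div_gcd Q n g Hg0 eq_refl) as H.
    rewrite HQ, Hn' in H at 1. rewrite !Nat.div_mul in H by auto. exact H. }
  assert (Hn'0 : 0 < n') by nia.
  rewrite (sumf_ext _ (fun d => if (1 <=? (Q' * d) mod n') && ((Q' * d) mod n' <=? L / g) then 1 else 0)).
  2:{ intros i _. rewrite HQ, Hn'.
      replace (Q' * g * i) with (g * (Q' * i)) by ring.
      replace (n' * g) with (g * n') by ring.
      rewrite Nat.Div0.mul_mod_distr_l.
      set (t := (Q' * i) mod n').
      destruct (Nat.leb_spec 1 (g * t)), (Nat.leb_spec 1 t), (Nat.leb_spec (g*t) L), (Nat.leb_spec t (L/g)); simpl; auto; try nia.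
      - exfalso. assert (t <= L / g) by (apply Nat.div_le_lower_bound; nia). lia.
      - exfalso. pose proof (Nat.Div0.mul_div_le L g). nia. }
  rewrite Hn'. replace (n' * g) with (g * n') by ring. rewrite sumf_period.
  - pose proof (inj_count (fun d => (Q' * d) mod n') n' (L / g)
                  (coprime_inj Q' n' Hn'0 Hc)) as H.
    cbv beta in H. pose proof (Nat.Div0.mul_div_le L g). nia.
  - intros x. replace (Q' * (x + n')) with (Q' * x + Q' * n') by ring.
    rewrite Nat.Div0.mod_add. reflexivity.
Qed.

Open Scope bool_scope.
Open Scope nat_scope.

Definition hv (n M0 Q x : nat) : nat :=
  if (1 <=? (Q*x) mod n) && ((Q*x) mod n <=? n/(M0*Q)) then 1 else 0.
Definition hE n M0 d (e : bool) Q := hv n M0 Q (if e then d else n - d).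
Definition X n M0 d e lo := sumf (hE n M0 d e) lo (S n - lo).
Definition cntge (M0 : nat) (l : list nat) := length (filter (Nat.leb M0) l).

Lemma X_step n M0 d e lo : lo <= n -> X n M0 d e lo = hE n M0 d e lo + X n M0 d e (S lo).
Proof.
  intros H. unfold X. replace (S n - lo) with (S (n - lo)) by lia.
  replace (S n - S lo) with (n - lo) by lia. reflexivity.
Qed.

Lemma X_mono n M0 d e lo hi : lo <= hi -> X n M0 d e hi <= X n M0 d e lo.
Proof.
  intros H. remember (hi - lo) as k. revert lo H Heqk. induction k; intros lo H Hk.
  - replace hi with lo by lia. lia.
  - destruct (Nat.le_gt_cases lo n).
    + rewrite (X_step n M0 d e lo) by auto. specialize (IHk (S lo) ltac:(lia) ltac:(lia)). lia.
    + unfold X. replace (S n - hi) with 0 by lia. simpl. lia.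
Qed.

Lemma quots_b0 f a : quots f a 0 = [].
Proof. destruct f; reflexivity. Qed.


Definition sg (e : bool) : Z := if e then 1%Z else (-1)%Z.

Lemma hE_one (n M0 d : nat) (HM0 : 1 <= M0) (Hd : d <= n) (e : bool) u b (p : Z) :
  1 <= u -> 1 <= b -> b < n -> M0 * u * b <= n ->
  (Z.of_nat u * Z.of_nat d - p * Z.of_nat n = sg e * Z.of_nat b)%Z ->
  hE n M0 d e u = 1.
Proof.
  intros Hu Hb Hbn Hle HZ. unfold hE, hv.
  assert (Hmod : (u * (if e then d else n - d)) mod n = b).
  { apply Nat2Z.inj. rewrite Nat2Z.inj_mod. rewrite Nat2Z.inj_mul.
    symmetry. destruct e; unfold sg in HZ.
    - apply Z.mod_unique with p; [left; lia|]. lia.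
    - rewrite Nat2Z.inj_sub by lia. apply Z.mod_unique with (Z.of_nat u - p)%Z; [left; lia|]. nia. }
  rewrite Hmod.
  assert (b <= n / (M0 * u)) by (apply Nat.div_le_lower_bound; nia).
  destruct (Nat.leb_spec 1 b), (Nat.leb_spec b (n / (M0 * u))); simpl; lia.
Qed.

Lemma core (n M0 d : nat) (HM0 : 1 <= M0) (Hd : d <= n) : forall fuel a b u v (p s : Z) (e : bool),
  n = u * a + v * b -> 1 <= u -> b < a -> a <= n ->
  (Z.of_nat u * Z.of_nat d - p * Z.of_nat n = sg e * Z.of_nat b)%Z ->
  (Z.of_nat v * Z.of_nat d - s * Z.of_nat n = - sg e * Z.of_nat a)%Z ->
  cntge M0 (quots fuel a b) <= X n M0 d e u + X n M0 d (negb e) ((a / b) * u + v).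
Proof.
  induction fuel as [|f IH]; intros a b u v p s e Hn Hu Hba Han HZ1 HZ2; [apply Nat.le_0_l|].
  cbn [quots]. destruct (Nat.eqb_spec b 0) as [Hb0|Hb0]; [apply Nat.le_0_l|].
  set (q := a / b). set (b' := a mod b).
  assert (Hdm : a = b * q + b') by (apply Nat.div_mod; auto).
  assert (Hb'b : b' < b) by (apply Nat.mod_upper_bound; auto).
  assert (Hq1 : 1 <= q) by (apply Nat.div_le_lower_bound; lia).
  unfold cntge. cbn [filter length]. fold (cntge M0 (quots f b b')).
  assert (Hhead : (if M0 <=? q then 1 else 0) <= hE n M0 d e u).
  { destruct (Nat.leb_spec M0 q); [|lia].
    assert (M0 * b <= q * b) by (apply Nat.mul_le_mono_r; auto).
    assert (u * (M0 * b) <= u * a) by (apply Nat.mul_le_mono_l; lia).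
    rewrite (hE_one n M0 d HM0 Hd e u b p); auto; try lia. }
  assert (Hu_n : u <= n) by nia.
  assert (HX : X n M0 d e u = hE n M0 d e u + X n M0 d e (S u)) by (apply X_step; auto).
  destruct (Nat.eqb_spec b' 0) as [Hb'0|Hb'0].
  - rewrite Hb'0, quots_b0. simpl. destruct (M0 <=? q); simpl; lia.
  - pose proof (IH b b' (q * u + v) u (Z.of_nat q * p + s)%Z p (negb e)) as IH'.
    assert (HIH : cntge M0 (quots f b b') <= X n M0 d (negb e) (q * u + v) + X n M0 d (negb (negb e)) (b / b' * (q * u + v) + u)).
    { apply IH'; try lia; try nia.
      - rewrite Hdm in HZ2. destruct e; unfold sg in *; simpl negb in *; rewrite Nat2Z.inj_add, Nat2Z.inj_mul in *; nia.
      - destruct e; unfold sg in *; simpl negb in *; lia. }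
    rewrite Bool.negb_involutive in HIH.
    assert (Hq2 : 1 <= b / b') by (apply Nat.div_le_lower_bound; lia).
    pose proof (X_mono n M0 d e (S u) (b / b' * (q * u + v) + u) ltac:(nia)).
    destruct (M0 <=? q); cbn [length]; fold (cntge M0 (quots f b b')); lia.
Qed.

Open Scope bool_scope.
Open Scope nat_scope.

Lemma per_d n M0 d : 1 <= M0 -> 1 <= d < n ->
  cntge M0 (quot_seq n d) <= sumf (fun Q => hv n M0 Q d + hv n M0 Q (n - d)) 1 n.
Proof.
  intros HM Hd. unfold quot_seq.
  pose proof (core n M0 d HM ltac:(lia) (S d) n d 1 0 0%Z 1%Z true ltac:(lia) ltac:(lia) ltac:(lia) ltac:(lia) ltac:(unfold sg; lia) ltac:(unfold sg; lia)) as H.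
  assert (1 <= n / d * 1 + 0) by (rewrite Nat.mul_1_r, Nat.add_0_r; apply Nat.div_le_lower_bound; lia).
  pose proof (X_mono n M0 d false 1 (n / d * 1 + 0) H0).
  rewrite sumf_add.
  unfold X in *. replace (S n - 1) with n in * by lia. unfold hE in *. cbn [negb] in H. lia.
Qed.

Lemma occ_one M0 x : forall N a,
  sumf (fun m => if M0 <=? m then (if Nat.eq_dec x m then 1 else 0) else 0) a N
  <= (if (M0 <=? x) && (a <=? x) then 1 else 0).
Proof.
  induction N as [|N IH]; intros a; simpl; [lia|].
  specialize (IH (S a)).
  destruct (Nat.eq_dec x a) as [->|Hne].
  - destruct (Nat.leb_spec M0 a), (Nat.leb_spec a a), (Nat.leb_spec (S a) a); simpl in *; lia.
  - destruct (M0 <=? a); destruct (Nat.leb_spec M0 x), (Nat.leb_spec a x), (Nat.leb_spec (S a) x); simpl in *; lia.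
Qed.

Lemma occ M0 : forall l N a,
  sumf (fun m => if M0 <=? m then count_occ Nat.eq_dec l m else 0) a N <= cntge M0 l.
Proof.
  induction l as [|x l IH]; intros N a.
  - simpl. rewrite sumf_ext with (g := fun _ => 0) by (intros; destruct (M0 <=? i); auto). rewrite sumf_zero. lia.
  - rewrite sumf_ext with (g := fun m => (if M0 <=? m then (if Nat.eq_dec x m then 1 else 0) else 0) + (if M0 <=? m then count_occ Nat.eq_dec l m else 0)).
    2:{ intros i _. simpl. destruct (M0 <=? i), (Nat.eq_dec x i); lia. }
    rewrite sumf_add. pose proof (occ_one M0 x N a). specialize (IH N a).
    unfold cntge in *. simpl. destruct (M0 <=? x), (a <=? x); cbn [andb length] in *; lia.
Qed.

Lemma per_Q n M0 Q : 1 <= n ->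
  sumf (fun d => hv n M0 Q d + hv n M0 Q (n - d)) 1 (n - 1) <= 2 * (n / (M0 * Q)).
Proof.
  intros Hn. rewrite sumf_add.
  set (L := n / (M0 * Q)).
  set (k := fun x => if (1 <=? (Q * x) mod n) && ((Q * x) mod n <=? L) then 1 else 0).
  assert (Hk : forall x, hv n M0 Q x = k x) by reflexivity.
  rewrite (sumf_ext _ k) by (intros; apply Hk).
  rewrite (sumf_ext (fun d => hv n M0 Q (n - d)) (fun d => k (n - d))) by (intros; apply Hk).
  assert (Hkn : k n = 0).
  { unfold k. rewrite Nat.Div0.mod_mul. reflexivity. }
  assert (S1 : forall h, sumf h 0 (S n) = h 0 + sumf h 1 (n - 1) + h n).
  { intros h. rewrite sumf_last. replace n with (S (n - 1)) at 1 by lia. simpl. lia. }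
  pose proof (count_mod Q n L ltac:(lia)) as C. fold k in C.
  pose proof (S1 k). pose proof (S1 (fun d => k (n - d))).
  rewrite sumf_refl in H0. cbv beta in H0.
  rewrite sumf_last in H. rewrite sumf_last in H0. simpl in H, H0. lia.
Qed.

Lemma total n M0 : 2 <= n -> 1 <= M0 ->
  sumf (fun m => if M0 <=? m then r n m else 0) 0 (S n)
  <= sumf (fun Q => 2 * (n / (M0 * Q))) 1 n.
Proof.
  intros Hn HM.
  eapply Nat.le_trans.
  { apply sumf_le with (g := fun m => sumf (fun d => if M0 <=? m then count_occ Nat.eq_dec (quot_seq n d) m else 0) 1 (n - 1)).
    intros m _. unfold r. rewrite fold_map_seq.
    destruct (M0 <=? m).
    - apply sumf_le. intros d _. destruct (Nat.gcd n d =? 1); lia.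
    - lia. }
  rewrite sumf_swap.
  eapply Nat.le_trans.
  { apply sumf_le with (g := fun d => sumf (fun Q => hv n M0 Q d + hv n M0 Q (n - d)) 1 n).
    intros d Hd. eapply Nat.le_trans; [apply occ|]. apply per_d; lia. }
  rewrite sumf_swap.
  apply sumf_le. intros Q _. apply per_Q. lia.
Qed.

Open Scope R_scope.

Fixpoint sumR (f : nat -> R) (a len : nat) : R :=
  match len with O => 0 | S l => f a + sumR f (S a) l end.

Lemma INR_sumf f a len : INR (sumf f a len) = sumR (fun i => INR (f i)) a len.
Proof. revert a; induction len; intros a; simpl; auto. rewrite plus_INR, IHlen. reflexivity. Qed.

Lemma sumR_le f g a len : (forall i, (a <= i < a + len)%nat -> f i <= g i) -> sumR f a len <= sumR g a len.
Proof.
  revert a; induction len as [|len IH]; intros a H; simpl; [lra|].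
  pose proof (H a ltac:(lia)). pose proof (IH (S a) ltac:(intros; apply H; lia)). lra.
Qed.

Lemma sumR_scal c f a len : sumR (fun i => c * f i) a len = c * sumR f a len.
Proof. revert a; induction len; intros a; simpl; [ring|]. rewrite IHlen. ring. Qed.

Lemma sumR_last f a n : sumR f a (S n) = sumR f a n + f (a + n)%nat.
Proof.
  revert a; induction n; intros a; simpl.
  - rewrite Nat.add_0_r. ring.
  - simpl in IHn. rewrite IHn. replace (S a + n)%nat with (a + S n)%nat by lia. ring.
Qed.

Lemma sum_f_R0_sumf f N : sum_f_R0 (fun m => INR (f m)) N = INR (sumf f 0 (S N)).
Proof.
  induction N.
  - simpl. rewrite Nat.add_0_r. reflexivity.
  - simpl sum_f_R0. rewrite IHN. rewrite (sumf_last f 0 (S N)), plus_INR. reflexivity.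
Qed.

Lemma ln_le' x y : 0 < x -> x <= y -> ln x <= ln y.
Proof.
  intros Hx Hxy. destruct (Rle_lt_or_eq_dec _ _ Hxy) as [H|H].
  - left. apply ln_increasing; auto.
  - subst. lra.
Qed.

Lemma harm_step N : (1 <= N)%nat -> / INR (S N) <= ln (INR (S N)) - ln (INR N).
Proof.
  intros HN. assert (HN' : 1 <= INR N) by (apply (le_INR 1); auto).
  rewrite S_INR.
  set (t := / (INR N + 1)).
  assert (Ht : 0 < t) by (unfold t; apply Rinv_0_lt_compat; lra).
  pose proof (exp_ineq1_le (- t)) as He.
  assert (E : 1 + - t = INR N * / (INR N + 1)) by (unfold t; field; lra).
  rewrite E in He.
  assert (Hpos : 0 < INR N * / (INR N + 1)) by (apply Rmult_lt_0_compat; [lra| apply Rinv_0_lt_compat; lra]).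
  apply ln_le' in He; auto.
  rewrite ln_exp, ln_mult, ln_Rinv in He; try lra. all: try (apply Rinv_0_lt_compat; lra). Show.
Qed.

Lemma harmonic N : (1 <= N)%nat -> sumR (fun Q => / INR Q) 1 N <= 1 + ln (INR N).
Proof.
  induction N as [|N IH]; intros HN; [lia|].
  destruct (Nat.eq_dec N 0) as [->|HN0].
  - simpl. rewrite ln_1. lra.
  - rewrite sumR_last. replace (1 + N)%nat with (S N) by lia.
    pose proof (harm_step N ltac:(lia)). specialize (IH ltac:(lia)). lra.
Qed.

Open Scope R_scope.

Lemma term_bound n M0 Q : (1 <= M0)%nat -> (1 <= Q)%nat ->
  INR (2 * (n / (M0 * Q))) <= 2 * INR n / INR M0 * / INR Q.
Proof.
  intros HM HQ.
  pose proof (Nat.Div0.mul_div_le n (M0 * Q)) as H. apply le_INR in H.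
  rewrite !mult_INR in H. rewrite mult_INR.
  set (x := INR (n / (M0 * Q))) in *.
  assert (HM' : 1 <= INR M0) by (apply (le_INR 1); auto).
  assert (HQ' : 1 <= INR Q) by (apply (le_INR 1); auto).
  assert (P : 0 < INR M0 * INR Q) by nra.
  replace (2 * INR n / INR M0 * / INR Q) with (2 * INR n * / (INR M0 * INR Q)) by (field; lra).
  replace (INR 2 * x) with (2 * (INR M0 * INR Q * x) * / (INR M0 * INR Q)) by (simpl; field; lra).
  apply Rmult_le_compat_r; [left; apply Rinv_0_lt_compat; auto|]. lra.
Qed.

Theorem lemma5p1 :
  forall K : R, 0 < K ->
  exists C : R,
    forall (n : nat) (M : R),
      (2 <= n)%nat ->
      1 <= M <= K * (ln (INR n)) ^ 2 ->
      sum_f_R0 (fun m => if Rle_dec M (INR m) then INR (r n m) else 0) n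
        <= C * INR n * ln (INR n) / M.
Proof.
  intros K HK. exists (4 * (1 + / ln 2)). intros n M Hn [HM1 HMK].
  destruct (archimed M) as [Hu1 Hu2].
  assert (Hup : (up M >= 2)%Z).
  { assert (1 < IZR (up M)) by lra. apply lt_IZR in H. lia. }
  set (M0 := Z.to_nat (up M - 1)).
  assert (HM0r : INR M0 = IZR (up M) - 1).
  { unfold M0. rewrite INR_IZR_INZ, Z2Nat.id by lia. rewrite minus_IZR. reflexivity. }
  assert (HM0 : (1 <= M0)%nat) by (unfold M0; lia).
  eapply Rle_trans.
  { apply sum_Rle with (Bn := fun m => INR (if (M0 <=? m)%nat then r n m else 0)).
    intros m _. destruct (Rle_dec M (INR m)) as [Hm|Hm].
    - assert (M0 <= m)%nat by (apply INR_le; lra).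
      destruct (Nat.leb_spec M0 m); [lra|lia].
    - apply pos_INR. }
  rewrite sum_f_R0_sumf.
  eapply Rle_trans; [apply le_INR, total; auto|].
  rewrite INR_sumf.
  eapply Rle_trans.
  { apply sumR_le with (g := fun Q => 2 * INR n / INR M0 * / INR Q).
    intros Q HQ. apply term_bound; auto; lia. }
  rewrite sumR_scal.
  assert (HA : 2 <= INR n) by (apply (le_INR 2); auto).
  assert (Hl2 : / 2 < ln 2) by apply ln_lt_2.
  assert (HLg : ln 2 <= ln (INR n)) by (apply ln_le'; lra).
  pose proof (harmonic n ltac:(lia)) as Hh.
  set (A := INR n) in *. set (Lg := ln A) in *.
  set (B := (1 + / ln 2) * Lg).
  assert (HB : 1 + Lg <= B).
  { unfold B. assert (1 <= / ln 2 * Lg).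
    { apply Rmult_le_reg_l with (ln 2); [lra|]. rewrite <- Rmult_assoc, Rinv_r by lra. lra. }
    lra. }
  assert (HM0' : 1 <= INR M0) by (apply (le_INR 1); auto).
  assert (Hinv : / INR M0 <= 2 * / M).
  { replace (2 * / M) with (/ (M / 2)) by (field; lra).
    apply Rinv_le_contravar; lra. }
  assert (HiM0 : 0 < / INR M0) by (apply Rinv_0_lt_compat; lra).
  assert (HiM : 0 < / M) by (apply Rinv_0_lt_compat; lra).
  assert (HBp : 0 <= B) by lra.
  unfold Rdiv.
  replace (4 * (1 + / ln 2) * A * Lg * / M) with (2 * A * (2 * / M) * B) by (unfold B; ring).
  eapply Rle_trans.
  { apply Rmult_le_compat_l with (r := 2 * A * / INR M0); [nra|exact Hh]. }
  eapply Rle_trans.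
  { apply Rmult_le_compat_l with (r := 2 * A * / INR M0); [nra|exact HB]. }
  apply Rmult_le_compat_r; [lra|].
  apply Rmult_le_compat_l; lra.
Qed.
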